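(* For the cycle $C_n$ with $n\ge 3$ vertices, $b_{OCD}(C_n)=1$ if $n=3$ and $b_{OCD}(C_n)=\lceil n/3\rceil$ if $n\ge 4$.
   Context: A set $S\subseteq V$ is a dominating set of a graph $G=(V,E)$ if every vertex not in $S$ is adjacent to a vertex of $S$. A set $\tilde D\subseteq V$ is an outer-connected dominating set of $G$ if $\tilde D$ is dominating and the induced subgraph $G[V\setminus\tilde D]$ is connected (the empty graph counts as connected). $\tilde\gamma_c(G)$ is the minimum size of an outer-connected dominating set. For a graph $G$ without isolated vertices, the outer-connected bondage number $b_{OCD}(G)$ is the minimum number of edges whose removal from $G$ yields a graph $G'$ with $\tilde\gamma_c(G')>\tilde\gamma_c(G)$. *)

(* Defs.v *)
From mathcomp Require Import all_boot.
Set Implicit Arguments. Unset Strict Implicit. Unset Printing Implicit Defensive.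

(* A finite simple graph on vertex type T is given by its edge set
   E : {set {set T}}, each edge being an unordered pair {x, y}. *)
Section Graphs.
Variable T : finType.

Definition adj (E : {set {set T}}) (x y : T) : bool :=
  (x != y) && ([set x; y] \in E).

Definition dominating (E : {set {set T}}) (S : {set T}) : bool :=
  [forall x, (x \notin S) ==> [exists y in S, adj E x y]].

(* The induced subgraph G[C] is connected (the empty graph counts as connected). *)
Definition induced_connected (E : {set {set T}}) (C : {set T}) : bool :=
  [forall x in C, forall y in C,
     connect (fun a b => [&& adj E a b, a \in C & b \in C]) x y].

Definition ocd_set (E : {set {set T}}) (D : {set T}) : bool :=
  dominating E D && induced_connected E (~: D).

(* Outer-connected domination number: minimum size of an OCD set
   (the full vertex set is always one, so #|T| is a valid default). *)
Definition gamma_oc (E : {set {set T}}) : nat :=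
  \big[minn/#|T|]_(D : {set T} | ocd_set E D) #|D|.

(* Outer-connected bondage number: minimum number of edges F of G whose
   removal increases gamma_oc (default #|E|.+1 if no such set exists). *)
Definition bondage_ocd (E : {set {set T}}) : nat :=
  \big[minn/#|E|.+1]_(F : {set {set T}} |
       (F \subset E) && (gamma_oc E < gamma_oc (E :\: F))) #|F|.
End Graphs.

Definition cycle_edges (n : nat) : {set {set 'I_n}} :=
  [set [set i; ordS i] | i : 'I_n].

(* Main.v *)
Require Import Defs.
From mathcomp Require Import all_boot zify.
Set Implicit Arguments. Unset Strict Implicit. Unset Printing Implicit Defensive.

Lemma bigmin_le (I : finType) (P : pred I) (F : I -> nat) d i :
  P i -> \big[minn/d]_(j | P j) F j <= F i.
Proof.
move=> Pi; rewrite -big_filter.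
have : i \in [seq j <- index_enum I | P j] by rewrite mem_filter Pi mem_index_enum.
elim: [seq j <- index_enum I | P j] => //= a s IH.
rewrite big_cons inE => /predU1P[->|/IH h]; first exact: geq_minl.
exact: leq_trans (geq_minr _ _) h.
Qed.

Lemma bigmin_ge (I : finType) (P : pred I) (F : I -> nat) d m :
  m <= d -> (forall i, P i -> m <= F i) -> m <= \big[minn/d]_(j | P j) F j.
Proof.
move=> hd hF; apply: (big_ind (fun x => m <= x)) => //.
by move=> x y hx hy; rewrite leq_min hx hy.
Qed.

Section C.
Variable n : nat.
Hypothesis hn : 3 <= n.

Lemma valS (i : 'I_n) : nat_of_ord (ordS i) = i.+1 %% n.
Proof. by []. Qed.

Lemma S_neq (i : 'I_n) : ordS i != i.
Proof.
apply/eqP=> /(congr1 (@nat_of_ord n)); rewrite valS.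
case: (ltngtP i.+1 n) => h1; have h2 := ltn_ord i.
- by rewrite modn_small //; lia.
- lia.
- by rewrite h1 modnn; lia.
Qed.

Lemma SS_neq (i : 'I_n) : ordS (ordS i) != i.
Proof.
apply/eqP=> /(congr1 (@nat_of_ord n)); rewrite !valS.
case: (ltngtP i.+2 n) => h1; have h2 := ltn_ord i.
- rewrite (modn_small (m:=i.+1)); last lia. rewrite modn_small //; lia.
- have e: i.+1 = n by lia. rewrite e modnn modn_small; lia.
- rewrite (modn_small (m:=i.+1)); last lia. rewrite h1 modnn. lia.
Qed.

Definition e (i : 'I_n) : {set 'I_n} := [set i; ordS i].

Lemma adj_sym (E : {set {set 'I_n}}) a b : adj E a b = adj E b a.
Proof. by rewrite /adj eq_sym setUC. Qed.

Lemma adj_cycle (E : {set {set 'I_n}}) a b : E \subset cycle_edges n ->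
  adj E a b -> (b = ordS a /\ e a \in E) \/ (a = ordS b /\ e b \in E).
Proof.
move=> sE /andP[nab abE].
have /imsetP[i _ hi] := subsetP sE _ abE.
have ha : a \in [set i; ordS i] by rewrite -hi set21.
have hb : b \in [set i; ordS i] by rewrite -hi set22.
move: ha hb; rewrite !in_set2 => /orP[]/eqP ha /orP[]/eqP hb; subst.
- by rewrite eqxx in nab.
- by left.
- by right; split=> //; rewrite /e setUC.
- by rewrite eqxx in nab.
Qed.

Lemma three_nbrs (a b c y : 'I_n) :
  (b = ordS a \/ a = ordS b) -> (c = ordS a \/ a = ordS c) ->
  (y = ordS a \/ a = ordS y) -> b != c -> y != b -> y != c -> False.
Proof.
move=> hb hc hy nbc nyb nyc.
case: hb => hb; case: hc => hc; case: hy => hy;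
  first [ by move: nbc; rewrite hb hc eqxx
        | by move: nbc; rewrite (ordS_inj (etrans (esym hb) hc)) eqxx
        | by move: nyb; rewrite hb hy eqxx
        | by move: nyb; rewrite (ordS_inj (etrans (esym hy) hb)) eqxx
        | by move: nyc; rewrite hc hy eqxx
        | by move: nyc; rewrite (ordS_inj (etrans (esym hy) hc)) eqxx ].
Qed.

Lemma nbr (E : {set {set 'I_n}}) a b : E \subset cycle_edges n ->
  adj E a b -> b = ordS a \/ a = ordS b.
Proof. by move=> sE /(adj_cycle sE) [[h _]|[h _]]; [left|right]. Qed.

Lemma ocd_compl_le2 (E : {set {set 'I_n}}) D :
  E \subset cycle_edges n -> ocd_set E D -> #|~: D| <= 2.
Proof.
move=> sE /andP[/forallP dom conn].
pose C := ~: D.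
pose R := fun a b => [&& adj E a b, a \in C & b \in C].
have conn' : forall x y, x \in C -> y \in C -> connect R x y.
  by move=> x y hx hy; move/forall_inP: conn => /(_ x hx) /forall_inP /(_ y hy).
case: (boolP [forall a, forall b, forall c, [&& a \in C, R a b & R a c] ==> (b == c)]) => H.
- have Hf : forall a b c, a \in C -> R a b -> R a c -> b == c.
    move=> a b c aC ab ac.
    move/forallP: H => /(_ a) /forallP /(_ b) /forallP /(_ c) /implyP; apply.
    by apply/and3P.
  change (#|C| <= 2); case: (set_0Vmem C) => [C0|[x xC]]; first by rewrite C0 cards0.
  pose N := [set a | R x a].
  have N1 : #|N| <= 1.
    apply/card_le1_eqP => u v; rewrite !inE => hu hv; apply/eqP.
    exact: Hf xC hv hu.
  have clo : forall p u, u \in x |: N -> path R u p -> last u p \in x |: N.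
    elim=> //= v p IH u hu /andP[Ruv pv]; apply: IH pv.
    move: hu; rewrite !inE => /orP[/eqP eu|Rxu]; first by subst u; rewrite Ruv orbT.
    suff -> : v == x by [].
    have Rux : R u x.
      by move: Rxu => /and3P[a1 a2 a3]; rewrite /R adj_sym a1 a2 a3.
    have uC : u \in C by move: Ruv => /and3P[_ -> _].
    exact: Hf uC Ruv Rux.
  have sub : C \subset x |: N.
    apply/subsetP => y yC; have /connectP[p pth ->] := conn' x y xC yC.
    by apply: clo pth; rewrite setU11.
  apply: leq_trans (subset_leq_card sub) _.
  rewrite cardsU1; have := leq_b1 (x \notin N); move: N1; lia.
- move/forallPn: H => [a /forallPn [b /forallPn [c]]].
  rewrite negb_imply => /andP[/and3P[aC Rab Rac] nbc].
  have := dom a; rewrite (_ : (a \notin D) = true); last by move: aC; rewrite inE.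
  move=> /existsP [y /andP[yD ay]].
  move: Rab Rac => /and3P[ab _ bC] /and3P[ac _ cC].
  exfalso; apply: (three_nbrs (nbr sE ab) (nbr sE ac) (nbr sE ay) nbc).
  + by apply/eqP => eyb; move: bC; rewrite inE -eyb yD.
  + by apply/eqP => eyc; move: cC; rewrite inE -eyc yD.
Qed.

Definition P3 (E : {set {set 'I_n}}) : bool :=
  [exists i, [&& e i \in E, e (ordS i) \in E & e (ordS (ordS i)) \in E]].

Lemma P3_ocd (E : {set {set 'I_n}}) i :
  e i \in E -> e (ordS i) \in E -> e (ordS (ordS i)) \in E ->
  ocd_set E (~: [set ordS i; ordS (ordS i)]).
Proof.
move=> h0 h1 h2; set s := ordS i; set t := ordS s.
have nis : i != s by rewrite eq_sym S_neq.
have nit : i != t by rewrite eq_sym SS_neq.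
have nst : s != t by rewrite eq_sym S_neq.
have nts : ordS t != s by rewrite SS_neq.
have ntt : ordS t != t by rewrite S_neq.
apply/andP; split.
- apply/forallP => x; apply/implyP; rewrite inE negbK in_set2.
  case/orP => /eqP ->; apply/existsP.
  + exists i; rewrite inE in_set2 negb_or nis nit /adj eq_sym nis /=.
    by rewrite setUC.
  + exists (ordS t); rewrite inE in_set2 negb_or nts ntt /adj eq_sym ntt /=.
    exact: h2.
- apply/forall_inP => x hx; apply/forall_inP => y hy.
  move: hx hy; rewrite setCK !in_set2.
  case/orP => /eqP -> /orP[] /eqP ->; rewrite ?connect0 //; apply: connect1.
  + by rewrite set21 set22 /adj nst h1.
  + by rewrite set21 set22 /adj eq_sym nst setUC h1.
Qed.

Lemma card_P3 (i : 'I_n) : #|~: [set ordS i; ordS (ordS i)]| = n - 2.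
Proof.
have := cardsC [set ordS i; ordS (ordS i)].
by rewrite cards2 eq_sym S_neq card_ord /=; lia.
Qed.

Lemma core (E : {set {set 'I_n}}) D u : E \subset cycle_edges n ->
  dominating E D -> u \notin D -> ordS u \notin D -> e u \in E -> P3 E.
Proof.
move=> sE /forallP dom uD vD eu.
have := dom u; rewrite uD /= => /existsP[y /andP[yD /(adj_cycle sE)]].
case=> [[ey _]|[uy ey]]; first by move: vD; rewrite -ey yD.
have := dom (ordS u); rewrite vD /= => /existsP[d /andP[dD /(adj_cycle sE)]].
case=> [[ed ev]|[ud _]]; last by move: uD; rewrite (ordS_inj ud) dD.
apply/existsP; exists y; by rewrite ey -uy eu ev.
Qed.

Lemma ocd_small_P3 (E : {set {set 'I_n}}) D : E \subset cycle_edges n ->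
  ocd_set E D -> #|D| <= n - 2 -> P3 E.
Proof.
move=> sE oD hD; have le2 := ocd_compl_le2 sE oD.
have := cardsC D; rewrite card_ord => hC.
have hh : #|~: D| == 2.
  rewrite eqn_leq le2 /=. move: hC hD. set k := #|~: D|; set m := #|D|. clearbody k m. lia.
move: hh => /cards2P[x [y [nxy hxy]]].
move: oD => /andP[dom conn].
have xC : x \in ~: D by rewrite hxy set21.
have yC : y \in ~: D by rewrite hxy set22.
move/forall_inP: conn => /(_ x xC) /forall_inP /(_ y yC) /connectP[[|z p] /=].
  by move=> _ exy; rewrite exy eqxx in nxy.
case/andP => /and3P[axz _ zC] _ _.
have nxz : x != z by case/andP: axz.
have ezy : z = y by move: zC; rewrite hxy in_set2 eq_sym (negbTE nxz) => /eqP.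
subst z.
case/(adj_cycle sE): axz => [[ey ex]|[ex ey]].
- by apply: (core sE dom) ex; rewrite -?ey -in_setC ?hxy ?set21 ?set22.
- by apply: (core sE dom) ey; rewrite -?ex -in_setC ?hxy ?set21 ?set22.
Qed.

Lemma gamma_ge (E : {set {set 'I_n}}) : E \subset cycle_edges n -> n - 2 <= gamma_oc E.
Proof.
move=> sE; apply: bigmin_ge; first by rewrite card_ord leq_subr.
move=> D oD; have := ocd_compl_le2 sE oD; have := cardsC D; rewrite card_ord.
set k := #|~: D|; set m := #|D|; clearbody k m; lia.
Qed.

Lemma gamma_P3 (E : {set {set 'I_n}}) : E \subset cycle_edges n ->
  (gamma_oc E <= n - 2) = P3 E.
Proof.
move=> sE; apply/idP/idP.
- apply: contraLR => nP; rewrite -ltnNge.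
  apply: bigmin_ge; first by rewrite card_ord; lia.
  move=> D oD; rewrite ltnNge; apply: contra nP; exact: ocd_small_P3.
- case/existsP => i /and3P[h0 h1 h2].
  have := bigmin_le (fun D : {set 'I_n} => #|D|) #|'I_n| (P3_ocd h0 h1 h2).
  by rewrite card_P3.
Qed.

Lemma e_inj : injective e.
Proof.
move=> i j eij.
have : i \in e j by rewrite -eij set21.
rewrite in_set2 => /orP[/eqP //|/eqP ij]; exfalso.
have : j \in e i by rewrite eij set21.
rewrite in_set2 ij => /orP[/eqP h|/eqP h].
- by move: (S_neq j); rewrite -h eqxx.
- by move: (SS_neq j); rewrite -h eqxx.
Qed.

Lemma count3 m : \sum_(i < m) (3 %| i : nat) = (m + 2) %/ 3.
Proof.
elim: m => [|m IH]; first by rewrite big_ord0.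
rewrite big_ord_recr /= IH.
have := divn_eq m 3; have := ltn_pmod m (isT : 0 < 3).
rewrite /dvdn; case: (m %% 3 =P 0) => h /=; lia.
Qed.

Lemma cover3 (i : 'I_n) :
  [|| 3 %| i, 3 %| ordS i | 3 %| ordS (ordS i)].
Proof.
rewrite !valS; have hi := ltn_ord i.
case: (ltngtP i.+2 n) => h1.
- rewrite (modn_small (m := i.+1)); last lia.
  rewrite modn_small //.
  rewrite /dvdn; case: (i %% 3 =P 0) => //= ha.
  case: (i.+1 %% 3 =P 0) => //= hb.
  apply/eqP; lia.
- have e1 : i.+1 = n by lia.
  by rewrite e1 modnn dvdn0 orbT.
- rewrite (modn_small (m := i.+1)); last lia.
  by rewrite h1 modnn dvdn0 !orbT.
Qed.

Lemma cover_count (F : {set {set 'I_n}}) :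
  (forall i, [|| e i \in F, e (ordS i) \in F | e (ordS (ordS i)) \in F]) ->
  n <= 3 * #|F|.
Proof.
move=> hF; set I := [set i | e i \in F].
have hI : #|I| <= #|F|.
  rewrite -(card_imset I e_inj); apply: subset_leq_card.
  by apply/subsetP => x /imsetP[i]; rewrite inE => h ->.
have cov : [set: 'I_n] \subset I :|: (@ordS n) @^-1: I :|: (@ordS n \o @ordS n) @^-1: I.
  by apply/subsetP => j _; rewrite !inE /= -orbA; exact: hF.
have := subset_leq_card cov; rewrite cardsT card_ord => h.
have h2 := (leq_card_setU (I :|: (@ordS n) @^-1: I) ((@ordS n \o @ordS n) @^-1: I)).1.
have h3 := (leq_card_setU I ((@ordS n) @^-1: I)).1.
have p1 : #|(@ordS n) @^-1: I| = #|I| by apply: card_preimset; exact: ordS_inj.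
have p2 : #|(@ordS n \o @ordS n) @^-1: I| = #|I|.
  by apply: card_preimset => x y /= hxy; do 2 apply: ordS_inj.

rewrite p1 in h3; rewrite p2 in h2.
move: h h2 h3 hI.
set a := #|_ :|: _ :|: _|; set b := #|I :|: _|; set c := #|I|; set d := #|F|.
clearbody a b c d; lia.
Qed.

Lemma eE0 (i : 'I_n) : e i \in cycle_edges n.
Proof. by apply/imsetP; exists i. Qed.

Lemma main : bondage_ocd (cycle_edges n) = (n + 2) %/ 3.
Proof.
set E0 := cycle_edges n.
have sE0 : E0 \subset cycle_edges n := subxx _.
have i0 : 'I_n := Ordinal (ltn_trans (isT : 0 < 2) hn).
have gE0 : gamma_oc E0 = n - 2.
  apply/eqP; rewrite eqn_leq gamma_ge // andbT gamma_P3 //.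
  by apply/existsP; exists i0; rewrite !eE0.
have cond : forall F : {set {set 'I_n}}, (F \subset E0) && (gamma_oc E0 < gamma_oc (E0 :\: F))
    = (F \subset E0) && ~~ P3 (E0 :\: F).
  by move=> F; rewrite gE0 -(gamma_P3 (subset_trans (subsetDl _ _) sE0)) ltnNge.
rewrite /bondage_ocd (eq_bigl (fun F : {set {set 'I_n}} => (F \subset E0) && ~~ P3 (E0 :\: F))); last first.
  by move=> F; exact: cond.
apply/eqP; rewrite eqn_leq; apply/andP; split.
- set F0 := e @: [set i : 'I_n | 3 %| i].
  have hF0 : (F0 \subset E0) && ~~ P3 (E0 :\: F0).
    apply/andP; split; first by apply/subsetP => x /imsetP[i _ ->]; exact: eE0.
    apply/existsPn => i; rewrite !inE !eE0 !andbT !(mem_imset _ _ e_inj) !inE.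
    by case/or3P: (cover3 i) => ->; rewrite ?andbF.
  apply: leq_trans (bigmin_le (fun F : {set {set 'I_n}} => #|F|) _ hF0) _.
  apply: leq_trans (leq_imset_card _ _) _.
  rewrite -count3 -sum1_card big_mkcond /=; apply: eq_leq; apply: eq_bigr => i _.
  by rewrite inE; case: (3 %| i).
- apply: bigmin_ge.
    have := @cover_count E0 (fun i => ltac:(by rewrite eE0)).
    set k := #|E0|; clearbody k; lia.
  move=> F /andP[sF nP]; have := @cover_count F.
  have hF : forall i, [|| e i \in F, e (ordS i) \in F | e (ordS (ordS i)) \in F].
    move=> i; move/existsPn: nP => /(_ i); rewrite !inE !eE0 !andbT.
    by case: (e i \in F); case: (e (ordS i) \in F); case: (e (ordS (ordS i)) \in F).
  move=> /(_ hF); set k := #|F|; clearbody k; lia.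
Qed.
End C.

Theorem theorem7p1 (n : nat) (hn : 3 <= n) :
  bondage_ocd (cycle_edges n) = (if n == 3 then 1 else (n + 2) %/ 3).
Proof.
rewrite (main hn); by case: eqP => // ->.
Qed.
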